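(* Fix $y>0$ and $0\le p_1'<p_1''\le y$, and suppose Assumptions 1 (with $U_0$ strictly increasing) and 2 hold. Suppose good 1 is chosen at the initial price, i.e. $q_1(p_1',y)>0$, and let $p^{10}$ be the (unique) price with $U_1(y-p^{10})=U_0(y)$. Let $\overline{p_1}$ be the minimum price $p_1\in[0,y]$ with $q_1(p_1,y)=0$. Then $\overline{p_1}\le p^{10}$. If in addition Assumption 3 holds, then $\overline{p_1}=p^{10}$.
   Context: Two goods, $0$ (price $0$) and $1$ (price $p_1\ge0$). All consumers have common income $y>0$, choose one good and spend the remainder on a numeraire. All consumers share utility functions $U_0:(0,\infty)\to[0,\infty)$ and $U_1:[0,\infty)\to[0,\infty)$ of the numeraire amount. Each consumer has an attention-price threshold $t\in(0,\infty]$, with population CDF $G$; a consumer considers good 1 at price $p_1$ iff $p_1<t$ (good 0 always considered) and chooses good 1 iff she considers it and $U_0(y)<U_1(y-p_1)$. Thus $q_{1}(p_{1},y)=\mathbb{1}\{U_{0}(y)<U_{1}(y-p_{1})\}\,(1-G(p_{1}))$ is the population choice probability of good 1. Assumption 1: (i) $U_0$ strictly increasing, $U_1$ continuous and strictly increasing; (ii) for every $y>0$ there is $\bar p_1\in[0,y]$ with $U_0(y)\ge U_1(y-\bar p_1)$. Assumption 2: $G(0)=0$. Assumption 3: $G(t)<1$ for all finite $t$. *)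

(* Defs.v *)
From Stdlib Require Import Reals Lra.
Open Scope R_scope.

Definition q1 (U0 U1 G : R -> R) (p1 y : R) : R :=
  (if Rlt_dec (U0 y) (U1 (y - p1)) then 1 else 0) * (1 - G p1).

(* G is the CDF of the attention threshold t in (0, +oo]:
   G x = Pr(t <= x) for finite x; values in [0,1], nondecreasing,
   right-continuous.  (Mass may sit at t = +oo, so G need not tend to 1.) *)
Definition is_threshold_cdf (G : R -> R) : Prop :=
  (forall x, 0 <= G x <= 1) /\
  (forall a b, a <= b -> G a <= G b) /\
  (forall x eps, 0 < eps -> exists delta, 0 < delta /\
      forall z, x <= z < x + delta -> Rabs (G z - G x) < eps).

Definition continuous_on_nonneg (f : R -> R) : Prop :=
  forall x, 0 <= x -> forall eps, 0 < eps -> exists delta, 0 < delta /\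
    forall z, 0 <= z -> Rabs (z - x) < delta -> Rabs (f z - f x) < eps.

Definition Assumption1 (U0 U1 : R -> R) : Prop :=
  (forall x, 0 < x -> 0 <= U0 x) /\
  (forall x, 0 <= x -> 0 <= U1 x) /\
  (forall a b, 0 < a -> a < b -> U0 a < U0 b) /\
  continuous_on_nonneg U1 /\
  (forall a b, 0 <= a -> a < b -> U1 a < U1 b) /\
  (forall y, 0 < y -> exists pbar, 0 <= pbar <= y /\ U1 (y - pbar) <= U0 y).

Definition Assumption2 (G : R -> R) : Prop := G 0 = 0.

Definition Assumption3 (G : R -> R) : Prop := forall t, G t < 1.

Definition is_min_zero_price (U0 U1 G : R -> R) (y pbar : R) : Prop :=
  (0 <= pbar <= y /\ q1 U0 U1 G pbar y = 0) /\
  (forall p, 0 <= p <= y -> q1 U0 U1 G p y = 0 -> pbar <= p).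

(* Main.v *)
Require Import Defs.
From Stdlib Require Import Reals Lra.
Open Scope R_scope.

Theorem lemma2 (U0 U1 G : R -> R) (y p1' p1'' p10 pbar : R) :
  0 < y -> 0 <= p1' -> p1' < p1'' -> p1'' <= y ->
  Assumption1 U0 U1 -> is_threshold_cdf G -> Assumption2 G ->
  0 < q1 U0 U1 G p1' y ->
  0 <= y - p10 -> U1 (y - p10) = U0 y ->
  is_min_zero_price U0 U1 G y pbar ->
  pbar <= p10 /\ (Assumption3 G -> pbar = p10).
Proof.
  intros Hy H1 H2 H3 [_ [_ [_ [_ [Hinc _]]]]] _ _ Hq Hp10 HU [[Hpb Hqb] Hmin].
  assert (Hpos : 0 <= p10).
  { destruct (Rle_or_lt 0 p10) as [h|h]; [exact h|].
    unfold q1 in Hq. destruct (Rlt_dec (U0 y) (U1 (y - p1'))) as [r|r].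
    - assert (U1 (y - p1') < U1 (y - p10)) by (apply Hinc; lra). lra.
    - lra. }
  split.
  - apply Hmin; [lra|]. unfold q1.
    destruct (Rlt_dec (U0 y) (U1 (y - p10))); lra.
  - intros A3. specialize (A3 pbar).
    unfold q1 in Hqb. destruct (Rlt_dec (U0 y) (U1 (y - pbar))) as [r|r].
    + lra.
    + assert (Hle : p10 <= pbar).
      { destruct (Rle_or_lt p10 pbar) as [h|h]; [exact h|].
        assert (U1 (y - p10) < U1 (y - pbar)) by (apply Hinc; lra). lra. }
      assert (pbar <= p10).
      { apply Hmin; [lra|]. unfold q1.
        destruct (Rlt_dec (U0 y) (U1 (y - p10))); lra. }
      lra.
Qed.
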